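(* Let $k$ be a field of characteristic zero, $n\ge1$, $S=k[x_1,\ldots,x_n]$, and $(S,L)$ a Lie–Rinehart algebra with $L$ a free $S$-module with basis $\alpha_1,\ldots,\alpha_n$ and enveloping algebra $U$. Let $p\ge1$ and $a=\sum_{|I|=p}f^I\alpha^I$ with $f^I\in S$ for $I\in\mathbb{N}^n$, $|I|=p$. If $k'\in\{1,\ldots,n\}$ and $J=(j_n,\ldots,j_1)\in\mathbb{N}^n$ has order $p-1$, then the coefficient of $\alpha^J$ in $[a,x_{k'}]$ (with respect to the left $S$-basis $\{\alpha^I\}$ of $U$) is $$\sum_{m=1}^n(j_m+1)\,\alpha_m(x_{k'})\,f^{J+e_m}.$$
   Context: $\alpha_m(x_{k'})$ denotes the action of $\alpha_m$ (through the anchor $L\to\operatorname{Der}(S)$) on $x_{k'}$; in $U$, $[\alpha,s]=\alpha(s)$. For $I=(i_n,\ldots,i_1)\in\mathbb{N}^n$, $\alpha^I=\alpha_n^{i_n}\cdots\alpha_1^{i_1}$ and $|I|=i_n+\cdots+i_1$ (its order); the $\alpha^I$ form a basis of $U$ as a left $S$-module. $e_m\in\mathbb{N}^n$ is the tuple with $1$ in the entry indexed by $m$ (the exponent of $\alpha_m$) and $0$ elsewhere. *)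

(* Defs.v *)
From HB Require Import structures.
From mathcomp Require Import all_boot all_algebra.
From mathcomp Require Import mpoly.
Set Implicit Arguments. Unset Strict Implicit. Unset Printing Implicit Defensive.
Import GRing.Theory.
Local Open Scope ring_scope.

(* Multi-indices I in N^n; index m : 'I_n (0-based) is the exponent of alpha_(m+1). *)
Notation multi n := {ffun 'I_n -> nat}.

Definition mono (U : nzRingType) (n : nat) (al : 'I_n -> U) (I : multi n) : U :=
  \prod_(m <- rev (enum 'I_n)) al m ^+ I m.

Definition ordI (n : nat) (I : multi n) : nat := (\sum_(m < n) I m)%N.

Definition addunit (n : nat) (J : multi n) (m : 'I_n) : multi n :=
  [ffun i => (J i + (i == m))%N].

Definition multi_of (n p : nat) (I : {ffun 'I_n -> 'I_p}) : multi n :=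
  [ffun m => nat_of_ord (I m)].

Definition is_kderivation (k : fieldType) (n : nat)
  (D : {mpoly k[n]} -> {mpoly k[n]}) : Prop :=
  [/\ (forall f g, D (f + g) = D f + D g),
      (forall (c : k) f, D (c *: f) = c *: D f) &
      (forall f g, D (f * g) = f * D g + D f * g)].

(* Main.v *)
Require Import Defs.
From HB Require Import structures.
From mathcomp Require Import all_boot all_algebra.
From mathcomp Require Import mpoly.
Set Implicit Arguments. Unset Strict Implicit. Unset Printing Implicit Defensive.
Import GRing.Theory.
Local Open Scope ring_scope.

Section Comb.
Variable n : nat.

Definition cnt (y : seq 'I_n) : multi n := [ffun m => count_mem m y].
Definition wI (K : multi n) : seq 'I_n :=
  flatten [seq nseq (K m) m | m <- rev (enum 'I_n)].
Definition Rn (x y : 'I_n) : bool := (y <= x)%N.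

Lemma Rn_trans : transitive Rn.
Proof. by move=> x y z; rewrite /Rn => h1 h2; apply: leq_trans h2 h1. Qed.

Lemma Rn_anti : antisymmetric Rn.
Proof. by move=> x y; rewrite /Rn => /andP[h1 h2]; apply: val_inj; apply/eqP; rewrite eqn_leq h1 h2. Qed.

Lemma ordI_cnt y : ordI (cnt y) = size y.
Proof.
elim: y => [|x y IH]; first by rewrite /ordI big1 // => m _; rewrite ffunE.
rewrite /ordI /= -IH /ordI.
rewrite (eq_bigr (fun m => (x == m) + cnt y m)%N); last by move=> m _; rewrite !ffunE.
rewrite big_split /= (bigD1 x) //= eqxx big1 ?addn0 ?add1n // => m; rewrite eq_sym => /negbTE ->.
by [].
Qed.

Lemma count_wI_gen (K : multi n) (l : seq 'I_n) x : uniq l ->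
  count_mem x (flatten [seq nseq (K m) m | m <- l]) = ((x \in l) * K x)%N.
Proof.
elim: l => [|m l IH] //= /andP[ml ul].
rewrite count_cat count_nseq IH // inE /=.
rewrite in_cons.
case: (eqVneq x m) => [->|ne]; first by rewrite (negbTE ml) ?eqxx ?orbF /= ?addn0 ?mul1n ?muln0 ?addn0.
by [].
Qed.

Lemma cnt_wI K : cnt (wI K) = K.
Proof.
apply/ffunP => x; rewrite ffunE count_wI_gen ?rev_uniq ?enum_uniq //.
by rewrite mem_rev mem_enum mul1n.
Qed.

Lemma sorted_flat (K : multi n) (l : seq 'I_n) :
  sorted (fun x y : 'I_n => (y < x)%N) l ->
  forall z : 'I_n, all (Rn z) l -> path Rn z (flatten [seq nseq (K m) m | m <- l]).
Proof.
elim: l => [|m l IH] //= hs z /andP[zm hl].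
rewrite cat_path; apply/andP; split.
  have hk : forall k z', Rn z' m -> path Rn z' (nseq k m).
    by elim=> //= k IHk z' h; rewrite h IHk // /Rn leqnn.
  exact: hk.
have hl' : all (fun y : 'I_n => (y < m)%N) l.
  by move: hs; rewrite path_sortedE // => [/andP[]|] // a b c h1 h2; apply: ltn_trans h2 h1.
apply: IH; first by apply: (path_sorted hs).
case: (K m) => [|k] /=.
  apply/allP => y yl; move/allP: hl' => /(_ y yl) h; rewrite /Rn.
  by apply: leq_trans (ltnW h) zm.
rewrite (_ : last m (nseq k m) = m); last by elim: k => //=.
apply/allP => y yl; move/allP: hl' => /(_ y yl) h.
by rewrite /Rn ltnW.
Qed.

Lemma wI_sorted K : sorted Rn (wI K).
Proof.
have hs : sorted (fun x y : 'I_n => (y < x)%N) (rev (enum 'I_n)).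
  rewrite rev_sorted.
  have := iota_ltn_sorted 0 n; rewrite -val_enum_ord sorted_map.
  by apply: sub_sorted => a b.
rewrite /wI; move: hs; case: (rev (enum 'I_n)) => [|m l] //= hs.
apply: (@path_sorted _ Rn m).
apply: (@sorted_flat K (m :: l) hs m) => /=; rewrite /Rn leqnn /=.
move: hs; rewrite path_sortedE => [/andP[h _]|]; last first.
  by move=> a b c h1 h2; apply: ltn_trans h2 h1.
by apply/allP => y yl; move/allP: h => /(_ y yl) /ltnW.
Qed.

Fixpoint mainl (w : seq 'I_n) : seq ('I_n * seq 'I_n) :=
  if w is m :: w' then (m, w') :: map (fun x => (x.1, m :: x.2)) (mainl w') else [::].

Lemma mainl_fst w : map fst (mainl w) = w.
Proof. by elim: w => //= m w IH; rewrite -map_comp; congr (_ :: _). Qed.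

Lemma mainl_prop w x : x \in mainl w ->
  [/\ subseq x.2 w, (size x.2 + 1 = size w)%N & cnt w = addunit (cnt x.2) x.1].
Proof.
elim: w x => [|m w IH] x //=; rewrite in_cons => /orP[/eqP -> /=|].
  split; [exact: subseq_cons | by rewrite addn1 |].
  rewrite /cnt /addunit; apply/ffunP => i; rewrite !ffunE /= eq_sym addnC //.
case/mapP => y /IH [h1 h2 h3] -> /=; split.
- by rewrite eqxx.
- by rewrite addSn h2.
- move/ffunP: h3 => h3; rewrite /cnt /addunit; apply/ffunP => i.
  move: (h3 i); rewrite /cnt /addunit !ffunE /= => ->.
  by rewrite addnA.
Qed.

Lemma addunit_inj (A B : multi n) m : (addunit A m == addunit B m) = (A == B).
Proof.
apply/eqP/eqP => [h|->] //; apply/ffunP => i; move/ffunP: h => /(_ i).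
by rewrite !ffunE => /addIn.
Qed.

End Comb.


Section Alg.
Variables (k : fieldType) (n : nat) (U : nzRingType).
Variable (iota : {rmorphism {mpoly k[n]} -> U}).
Variable (al : 'I_n -> U).
Variable (rho : 'I_n -> {mpoly k[n]} -> {mpoly k[n]}).
Hypothesis hanchor : forall m s, al m * iota s - iota s * al m = iota (rho m s).
Local Notation S := {mpoly k[n]}.

Definition P (w : seq 'I_n) : U := \prod_(m <- w) al m.

Lemma mono_P K : mono al K = P (wI K).
Proof.
rewrite /mono /P /wI; elim: (rev (enum 'I_n)) => [|m l IH]; first by rewrite !big_nil.
rewrite /= !big_cons big_cat /= IH; congr (_ * _).
by elim: (K m) => [|j IHj]; rewrite ?big_nil ?expr0 // /= big_cons exprS IHj.
Qed.

Lemma P_sorted y : sorted (@Rn n) y -> P y = mono al (cnt y).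
Proof.
move=> hy; rewrite mono_P; congr P.
apply: (@sorted_eq _ _ (@Rn_trans n) (@Rn_anti n)) => //; first exact: wI_sorted.
rewrite /perm_eq; apply/allP => x _ /=.
have := cnt_wI (cnt y); move/ffunP/(_ x); rewrite /cnt !ffunE => ->.
by [].
Qed.

Definition LS (t : seq (seq 'I_n * S)) := \sum_(x <- t) iota x.2 * P x.1.
Definition mainT w s := [seq (x.2, rho x.1 s) | x <- mainl w].

Lemma alm_LS m t : al m * LS t =
  LS [seq (m :: x.1, x.2) | x <- t] + LS [seq (x.1, rho m x.2) | x <- t].
Proof.
rewrite /LS !big_map mulr_sumr -big_split /=; apply: eq_bigr => x _.
rewrite /P big_cons mulrA.
have -> : al m * iota x.2 = iota x.2 * al m + iota (rho m x.2).
  by rewrite -hanchor addrC subrK.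
by rewrite mulrDl !mulrA.
Qed.

Lemma LS_cat t1 t2 : LS (t1 ++ t2) = LS t1 + LS t2.
Proof. by rewrite /LS big_cat. Qed.

Lemma comm_list w s : exists t, P w * iota s - iota s * P w = LS (mainT w s) + LS t
  /\ all (fun x => subseq x.1 w && (size x.1 + 2 <= size w)%N) t.
Proof.
elim: w => [|m w [t [IH ht]]].
  by exists [::]; rewrite /P big_nil mul1r mulr1 subrr /LS !big_nil addr0.
exists ([seq (m :: x.1, x.2) | x <- t] ++ [seq (x.1, rho m x.2) | x <- t]
        ++ [seq (x.1, rho m x.2) | x <- mainT w s]); split.
  have -> : P (m :: w) * iota s - iota s * P (m :: w)
      = al m * (P w * iota s - iota s * P w) + (al m * iota s - iota s * al m) * P w.
    by rewrite /P big_cons mulrBr mulrBl !mulrA addrA subrK.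
  rewrite IH hanchor mulrDr !alm_LS !LS_cat.
  have -> : mainT (m :: w) s = (w, rho m s) :: [seq (m :: x.1, x.2) | x <- mainT w s].
    by rewrite /mainT /= -!map_comp.
  have -> : forall l, LS ((w, rho m s) :: l) = iota (rho m s) * P w + LS l.
    by move=> l; rewrite /LS big_cons.
  set A := LS [seq (m :: x.1, x.2) | x <- mainT w s].
  set B := LS [seq (x.1, rho m x.2) | x <- mainT w s].
  set C := LS [seq (m :: x.1, x.2) | x <- t].
  set D := LS [seq (x.1, rho m x.2) | x <- t].
  set E := iota (rho m s) * P w.
  rewrite [E + A]addrC -!addrA; congr (A + _).
  rewrite [RHS]addrC -!addrA addrCA; congr (C + _).
  by rewrite addrCA.
rewrite !all_cat; apply/and3P; split; apply/allP => x.
- case/mapP => y yt -> /=; move/allP: ht => /(_ y yt) /andP[h1 h2].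
  by rewrite eqxx h1 /= addSn ltnS.
- case/mapP => y yt -> /=; move/allP: ht => /(_ y yt) /andP[h1 h2].
  apply/andP; split; first exact: (subseq_trans h1 (subseq_cons w m)).
  by apply: leq_trans h2 _.
- case/mapP => y /mapP [z zt ->] -> /=.
  have [h1 h2 _] := mainl_prop zt.
  apply/andP; split; first exact: (subseq_trans h1 (subseq_cons w m)).
  by rewrite -h2 addn1 addn2.
Qed.

Lemma sum_seq_count (F : 'I_n -> S) w :
  \sum_(m <- w) F m = \sum_(m : 'I_n) (count_mem m w)%:R * F m.
Proof.
elim: w => [|x w IH].
  by rewrite big_nil big1 // => m _; rewrite mul0r.
rewrite big_cons IH /=.
rewrite [RHS](eq_bigr (fun m => (x == m)%:R * F m + (count_mem m w)%:R * F m)); last first.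
  by move=> m _; rewrite natrD mulrDl.
rewrite big_split /=; congr (_ + _).
rewrite (bigD1 x) //= eqxx mul1r big1 ?addr0 // => m; rewrite eq_sym => /negbTE ->.
by rewrite mul0r.
Qed.

Variable coef : U -> multi n -> S.
Hypothesis hcoef : forall (s : seq (multi n)) (g : multi n -> S) (J : multi n),
      uniq s ->
      coef (\sum_(I <- s) iota (g I) * mono al I) J = if J \in s then g J else 0.

Definition MS (t : seq (multi n * S)) := \sum_(x <- t) iota x.2 * mono al x.1.
Definition HasCoef u J c := exists t, u = MS t /\ \sum_(x <- t | x.1 == J) x.2 = c.

Lemma coef_MS t J : coef (MS t) J = \sum_(x <- t | x.1 == J) x.2.
Proof.
pose s := undup (map fst t).
pose g I := \sum_(x <- t | x.1 == I) x.2.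
have -> : MS t = \sum_(I <- s) iota (g I) * mono al I.
  rewrite /g.
  under [RHS]eq_bigr do rewrite rmorph_sum mulr_suml big_mkcond /=.
  rewrite exchange_big /MS; apply: eq_big_seq => x xt /=.
  have xs : x.1 \in s by rewrite mem_undup; apply/mapP; exists x.
  rewrite (bigD1_seq x.1) ?undup_uniq //= eqxx big1_seq ?addr0 //.
  by move=> I /andP[ne _]; rewrite eq_sym (negbTE ne).
rewrite hcoef ?undup_uniq //; case: ifP => // hJ.
rewrite big1_seq // => x /andP[/eqP e xt]; move/negbT: hJ; rewrite -e mem_undup.
by case/negP; apply/mapP; exists x.
Qed.

Lemma HasCoef_coef u J c : HasCoef u J c -> coef u J = c.
Proof. by case=> t [-> <-]; exact: coef_MS. Qed.

Lemma HC0 J : HasCoef 0 J 0.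
Proof. by exists [::]; rewrite /MS !big_nil. Qed.

Lemma HCD u v J c d : HasCoef u J c -> HasCoef v J d -> HasCoef (u + v) J (c + d).
Proof.
case=> t1 [-> <-] [t2 [-> <-]]; exists (t1 ++ t2).
by rewrite /MS !big_cat.
Qed.

Lemma HCscale g u J c : HasCoef u J c -> HasCoef (iota g * u) J (g * c).
Proof.
case=> t [-> <-]; exists [seq (x.1, g * x.2) | x <- t]; split.
  by rewrite /MS big_map mulr_sumr; apply: eq_bigr => x _; rewrite rmorphM mulrA.
by rewrite big_map mulr_sumr.
Qed.

Lemma HCsum (T : finType) (Q : pred T) (F : T -> U) (C : T -> S) J :
  (forall i, Q i -> HasCoef (F i) J (C i)) ->
  HasCoef (\sum_(i | Q i) F i) J (\sum_(i | Q i) C i).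
Proof.
move=> h; apply: (big_rec2 (fun u c => HasCoef u J c)); first exact: HC0.
by move=> i u c qi hu; apply: HCD => //; apply: h.
Qed.


Lemma LS_MS w l : sorted (@Rn n) w -> all (fun x => subseq x.1 w) l ->
  LS l = MS [seq (cnt x.1, x.2) | x <- l].
Proof.
move=> sw hl; rewrite /LS /MS big_map; apply: eq_big_seq => x xl /=.
congr (_ * _); apply: P_sorted; apply: (subseq_sorted (@Rn_trans n)) sw.
by move/allP: hl => /(_ x xl).
Qed.

Lemma HC_comm I J s : (ordI J).+1 = ordI I ->
  HasCoef (mono al I * iota s - iota s * mono al I) J
          (\sum_(m < n) (I == addunit J m)%:R * (I m)%:R * rho m s).
Proof.
move=> hIJ; rewrite mono_P; set w := wI I.
have sw : sorted (@Rn n) w := wI_sorted I.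
have cw : cnt w = I := cnt_wI I.
have sz : size w = ordI I by rewrite -ordI_cnt cw.
have [t [-> ht]] := comm_list w s.
exists ([seq (cnt x.1, x.2) | x <- mainT w s] ++ [seq (cnt x.1, x.2) | x <- t]); split.
  rewrite /MS big_cat /= -/(MS _) -/(MS _) -!(LS_MS (w := w)) //.
    by apply/allP => x xt; move/allP: ht => /(_ x xt) /andP[].
  apply/allP => x /mapP [z zm ->] /=.
  by have [] := mainl_prop zm.
rewrite big_cat /= [X in _ + X]big_map [X in _ + X]big1_seq ?addr0; last first.
  move=> x /andP[/eqP e xt]; move/allP: ht => /(_ x xt) /andP[_ h].
  move: h; rewrite sz -hIJ -e ordI_cnt.
  by rewrite addn2 ltnn.
rewrite big_map /mainT big_map /=.
rewrite big_seq_cond.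
rewrite (eq_bigl (fun z : 'I_n * seq 'I_n => (z \in mainl w) && (I == addunit J z.1))); last first.
  move=> z /=; case zm: (z \in mainl w) => //=.
  have [_ _ e] := mainl_prop zm.
  by rewrite -cw e addunit_inj.
rewrite -big_seq_cond.
rewrite -(big_map fst (fun m => I == addunit J m) (fun m => rho m s)) mainl_fst.
rewrite big_mkcond sum_seq_count; apply: eq_bigr => m _.
have -> : count_mem m w = I m by rewrite -cw /cnt ffunE.
by case: (I == addunit J m); rewrite ?mulr0 ?mul0r ?mul1r.
Qed.

End Alg.

Unset Implicit Arguments. Set Strict Implicit.

Lemma ordI_addunit n (J : multi n) m : ordI (addunit J m) = (ordI J).+1.
Proof.
rewrite /ordI (eq_bigr (fun i => J i + (i == m))%N); last by move=> i _; rewrite ffunE.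
have h1 : (\sum_(i < n) ((i == m) : nat) = 1)%N.
  by rewrite (bigD1 m) //= ?eqxx big1 ?addn0 // => i /negbTE ->.
by rewrite big_split /= h1 addn1.
Qed.

Lemma leq_ordI n (J : multi n) i : (J i <= ordI J)%N.
Proof. by rewrite /ordI (bigD1 i) //= leq_addr. Qed.

Theorem lemma2p3 (k : fieldType) (hchar : [pchar k] =i pred0)
  (n : nat) (hn : (0 < n)%N)
  (U : nzRingType) (iota : {rmorphism {mpoly k[n]} -> U})
  (al : 'I_n -> U)
  (rho : 'I_n -> {mpoly k[n]} -> {mpoly k[n]})
  (c : 'I_n -> 'I_n -> 'I_n -> {mpoly k[n]})
  (coef : U -> multi n -> {mpoly k[n]})
  (hder : forall m, is_kderivation (rho m))
  (hanchor : forall m s, al m * iota s - iota s * al m = iota (rho m s))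
  (hbr : forall i j, al i * al j - al j * al i = \sum_(l < n) iota (c i j l) * al l)
  (hbr_anchor : forall i j f,
      rho i (rho j f) - rho j (rho i f) = \sum_(l < n) c i j l * rho l f)
  (hspan : forall u : U, exists (s : seq (multi n)) (g : multi n -> {mpoly k[n]}),
      u = \sum_(I <- s) iota (g I) * mono al I)
  (hcoef : forall (s : seq (multi n)) (g : multi n -> {mpoly k[n]}) (J : multi n),
      uniq s ->
      coef (\sum_(I <- s) iota (g I) * mono al I) J = if J \in s then g J else 0)
  (p : nat) (hp : (0 < p)%N) (f : multi n -> {mpoly k[n]})
  (q : 'I_n) (J : multi n) (hJ : ordI J = p.-1) :
  let a := \sum_(I : {ffun 'I_n -> 'I_p.+1} | ordI (multi_of I) == p)
             iota (f (multi_of I)) * mono al (multi_of I) in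
  coef (a * iota 'X_q - iota 'X_q * a) J
  = \sum_(m < n) (J m).+1%:R * rho m 'X_q * f (addunit J m).
Proof.
move=> a.
have E : a * iota 'X_q - iota 'X_q * a =
   \sum_(I : {ffun 'I_n -> 'I_p.+1} | ordI (multi_of I) == p)
     iota (f (multi_of I)) * (mono al (multi_of I) * iota 'X_q - iota 'X_q * mono al (multi_of I)).
  rewrite /a mulr_suml mulr_sumr -sumrB; apply: eq_bigr => I _.
  rewrite mulrBr !mulrA; congr (_ - _).
  by rewrite -!rmorphM mulrC.
have HC := HCsum (Q := fun I : {ffun 'I_n -> 'I_p.+1} => ordI (multi_of I) == p)
  (fun I hI => HCscale (f (multi_of I)) (@HC_comm k n U iota al rho hanchor (multi_of I) J 'X_q
   (etrans (congr1 S hJ) (etrans (prednK hp) (esym (eqP hI)))))).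
rewrite E (HasCoef_coef hcoef HC).
under eq_bigr do rewrite mulr_sumr.
rewrite exchange_big /=; apply: eq_bigr => m _.
pose I0 : {ffun 'I_n -> 'I_p.+1} := [ffun i => inord (addunit J m i)].
have hmo : multi_of I0 = addunit J m.
  apply/ffunP => i; rewrite !ffunE inordK //.
  rewrite ltnS -(prednK hp) -hJ.
  case: (i == m) => /=; last by rewrite addn0 (leq_trans (@leq_ordI _ J i)).
  by rewrite addn1 ltnS (@leq_ordI _ J i).
rewrite (bigD1 I0) /=; last by rewrite hmo ordI_addunit hJ prednK.
rewrite big1 ?addr0; last first.
  move=> I /andP[_ ne]; case: eqP => [e|_]; last by rewrite /= mulr0n !mul0r mulr0.
  case/negP: ne; apply/eqP/ffunP => i; apply: val_inj.
  by move/ffunP: e => /(_ i); rewrite -hmo !ffunE.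
rewrite hmo eqxx mul1r ffunE eqxx addn1.
by rewrite mulrC.
Qed.
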